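(* For every base $b\ge 2$ there exist infinitely many $b$-wARH numbers, and infinitely many distinct integers $A\ge 0$ that occur as additive extra terms of some $b$-wARH number.
   Context: Fix a base $b\ge 2$. $s_b(N)$ is the sum of the base-$b$ digits of $N$. For a positive integer $X$, its reversal $X^R$ is the integer whose base-$b$ representation is that of $X$ written in reverse order (leading zeros of the result are dropped). A positive integer $N$ is a $b$-wARH number if there exists an integer $A\ge 0$, called an additive extra term of $N$, such that $N=(A+s_b(N))+(A+s_b(N))^R$. *)

(* Defs.v *)
From mathcomp Require Import all_boot.
Set Implicit Arguments. Unset Strict Implicit. Unset Printing Implicit Defensive.

(* base-b digits of n, least significant first (fuel = n suffices for b >= 2) *)
Fixpoint digits_aux (b fuel n : nat) : seq nat :=
  match fuel with
  | 0 => [::]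
  | fuel'.+1 => if n == 0 then [::] else (n %% b) :: digits_aux b fuel' (n %/ b)
  end.
Definition digits (b n : nat) : seq nat := digits_aux b n n.

Definition from_digits (b : nat) (s : seq nat) : nat :=
  foldr (fun d acc => d + b * acc) 0 s.

Definition digit_sum (b n : nat) : nat := sumn (digits b n).

(* X^R : digits written in reverse order (leading zeros of result vanish) *)
Definition rev_num (b n : nat) : nat := from_digits b (rev (digits b n)).

Definition additive_extra_term (b N A : nat) : Prop :=
  N = (A + digit_sum b N) + rev_num b (A + digit_sum b N).

Definition wARH (b N : nat) : Prop :=
  0 < N /\ exists A, additive_extra_term b N A.

(* Main.v *)
Require Import Defs.
From mathcomp Require Import all_boot.
From mathcomp Require Import zify.

Lemma digits_aux_fuel b : 2 <= b -> forall f1 f2 n, n <= f1 -> n <= f2 ->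
  digits_aux b f1 n = digits_aux b f2 n.
Proof.
move=> hb; elim=> [|f1 IH] [|f2] n h1 h2 //=.
- by have -> : n = 0 by lia.
- by have -> : n = 0 by lia.
- case: eqP => // hn; congr (_ :: _); apply: IH.
  + have : n %/ b < n by rewrite ltn_Pdiv //; lia.
    lia.
  + have : n %/ b < n by rewrite ltn_Pdiv //; lia.
    lia.
Qed.

Lemma digitsE b n : 2 <= b ->
  digits b n = if n == 0 then [::] else n %% b :: digits b (n %/ b).
Proof.
move=> hb; rewrite /digits; case: n => [|n] //=.
congr (_ :: _); apply: digits_aux_fuel => //.
have : n.+1 %/ b < n.+1 by rewrite ltn_Pdiv //; lia.
lia.
Qed.

Lemma digits_pow b k : 2 <= b -> digits b (b ^ k) = nseq k 0 ++ [:: 1].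
Proof.
move=> hb; elim: k => [|k IH].
  rewrite expn0 digitsE //.
  have -> : (1 %% b) = 1 by rewrite modn_small; lia.
  have -> : (1 %/ b) = 0 by rewrite divn_small; lia.
  by [].
rewrite digitsE // expnS.
have -> : (b * b ^ k == 0) = false.
  apply/negbTE; rewrite muln_eq0 negb_or expn_eq0; apply/andP; split; lia.
rewrite mulnC modnMl mulnK; last lia.
by rewrite IH.
Qed.

Lemma from_digits_nseq0 b k : from_digits b (nseq k 0) = 0.
Proof. by elim: k => //= k ->; rewrite muln0. Qed.

Lemma rev_num_pow b k : 2 <= b -> rev_num b (b ^ k) = 1.
Proof.
move=> hb; rewrite /rev_num digits_pow // rev_cat /= -/(rev (nseq k 0)).
have -> : rev (nseq k 0) = nseq k 0 by rewrite rev_nseq.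
by rewrite /= from_digits_nseq0 muln0.
Qed.

Lemma digit_sum_pow1 b k : 2 <= b -> 0 < k -> digit_sum b (b ^ k + 1) = 2.
Proof.
move=> hb hk; rewrite /digit_sum digitsE //.
have -> : (b ^ k + 1 == 0) = false by lia.
case: k hk => // k _.
rewrite expnS mulnC modnMDl modn_small; last lia.
rewrite divnMDl; last lia.
rewrite divn_small; last lia.
rewrite addn0 digits_pow //= sumn_cat /=.
have -> : sumn (nseq k 0) = 0 by elim: k => //= k ->.
by [].
Qed.

Lemma pow_big b k : 2 <= b -> k < b ^ k.
Proof.
move=> hb; elim: k => [|k IH]; first by rewrite expn0.
rewrite expnS; nia.
Qed.

Lemma key b k : 2 <= b -> 0 < k ->
  additive_extra_term b (b ^ k + 1) (b ^ k - 2).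
Proof.
move=> hb hk; rewrite /additive_extra_term digit_sum_pow1 //.
have h : 2 <= b ^ k.
  case: k hk => // k _; rewrite expnS; have := pow_big b k hb; nia.
have -> : b ^ k - 2 + 2 = b ^ k by lia.
by rewrite rev_num_pow.
Qed.

Theorem proposition11 (b : nat) (hb : 2 <= b) :
  (forall M : nat, exists N : nat, M < N /\ wARH b N) /\
  (forall M : nat, exists A N : nat, M < A /\ 0 < N /\ additive_extra_term b N A).
Proof.
split=> M.
- exists (b ^ M.+3 + 1); have := pow_big b M.+3 hb.
  split; first lia.
  split; first lia.
  by exists (b ^ M.+3 - 2); apply: key.
- exists (b ^ M.+3 - 2), (b ^ M.+3 + 1); have := pow_big b M.+3 hb.
  split; first lia. split; first lia.
  by apply: key.
Qed.
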